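(* Let $m\ge1$ and let $H_{2m}$ be as in the context with $\zeta=1$, i.e. $h(w,w')=1-4ww'$. Then for all $w_1,\ldots,w_{2m}$ at which the expression is defined, \[ H_{2m}(w_1,\ldots,w_{2m})=2^{m(m-1)} . \]
   Context: For a parameter $\zeta$, $h(w,w')=1-(3+\zeta^2)ww'+(1-\zeta^2)ww'(w+w')$ and \[ H_{2m}(w_1,\ldots,w_{2m})=\frac{\prod_{i=1}^m\prod_{j=m+1}^{2m}h(w_i,w_j)}{\prod_{1\le i<j\le m}(w_i-w_j)\prod_{m+1\le i<j\le 2m}(w_i-w_j)}\ \det_{1\le i\le m,\ m+1\le j\le 2m}\frac{1}{h(w_i,w_j)}. \] *)

(* Defs.v *)
From HB Require Import structures.
From mathcomp Require Import all_boot all_order all_algebra.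
Set Implicit Arguments. Unset Strict Implicit. Unset Printing Implicit Defensive.
Import Order.TTheory GRing.Theory Num.Theory.
Local Open Scope ring_scope.

Definition hzeta (R : ringType) (zeta w w' : R) : R :=
  1 - (3 + zeta ^+ 2) * w * w' + (1 - zeta ^+ 2) * w * w' * (w + w').

(* Variables w_1..w_{2m} are encoded as w : 'I_(m + m) -> R;
   w_i (1 <= i <= m) is w (lshift m (i-1)), w_{m+j} is w (rshift m (j-1)). *)
Definition H2m (R : fieldType) (zeta : R) (m : nat) (w : 'I_(m + m) -> R) : R :=
  (\prod_(i < m) \prod_(j < m) hzeta zeta (w (lshift m i)) (w (rshift m j)))
  / ((\prod_(i < m) \prod_(j < m | (i < j)%N) (w (lshift m i) - w (lshift m j)))
     * (\prod_(i < m) \prod_(j < m | (i < j)%N) (w (rshift m i) - w (rshift m j))))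
  * \det (\matrix_(i < m, j < m) (hzeta zeta (w (lshift m i)) (w (rshift m j)))^-1).

(* Main.v *)
Require Import Defs.
From HB Require Import structures.
From mathcomp Require Import all_boot all_order all_algebra.
From mathcomp Require Import ring.
Import Order.TTheory GRing.Theory Num.Theory.
Set Implicit Arguments. Unset Strict Implicit.
Local Open Scope ring_scope.

Lemma schur (R : fieldType) n (M : 'M[R]_(1 + n)) : M 0 0 != 0 ->
  \det M = M 0 0 * \det (drsubmx M - (M 0 0)^-1 *: (dlsubmx M *m ursubmx M)).
Proof.
move=> a0; set a := M 0 0.
have hul : ulsubmx M = a%:M.
  apply/matrixP => i j; rewrite !ord1 !mxE /=.
  by congr (M _ _); apply/val_inj.
pose L : 'M[R]_(1 + n) := block_mx 1%:M 0 (- a^-1 *: dlsubmx M) 1%:M.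
have hL : L *m M = block_mx (ulsubmx M) (ursubmx M) 0
             (drsubmx M - a^-1 *: (dlsubmx M *m ursubmx M)).
  rewrite /L -{2}(submxK M) mulmx_block !mul1mx !mul0mx !addr0 ?add0r.
  congr block_mx. idtac.
    by rewrite hul -scalemxAl mul_mx_scalar scalerA mulNr mulVf // scaleN1r addNr.
  by rewrite -scalemxAl scaleNr addrC.
have := congr1 determinant hL.
rewrite det_mulmx det_lblock det_ublock !det1 !mul1r hul det_scalar1 => ->.
by [].
Qed.

Definition hh (R : ringType) (d a b : R) := 1 - d ^+ 2 * a * b.
Definition VV (R : ringType) n (x : nat -> R) :=
  \prod_(i < n) \prod_(j < n | (i < j)%N) (x i - x j).
Definition PP (R : ringType) (d : R) n (x y : nat -> R) :=
  \prod_(i < n) \prod_(j < n) hh d (x i) (y j).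

Lemma prod_recl_cond (R : comRingType) n (P : pred nat) (F : nat -> R) :
  \prod_(j < n.+1 | P j) F j = (if P 0%N then F 0%N else 1) * \prod_(j < n | P j.+1) F j.+1.
Proof. by rewrite big_mkcond big_ord_recl [in RHS]big_mkcond. Qed.

Lemma VV_rec (R : comRingType) n (x : nat -> R) :
  VV n.+1 x = (\prod_(j < n) (x 0%N - x j.+1)) * VV n (fun k => x k.+1).
Proof.
rewrite /VV big_ord_recl; congr (_ * _).
  by rewrite (prod_recl_cond n (fun j => 0 < j)%N (fun j => x 0%N - x j)) mul1r.
apply: eq_bigr => i _.
by rewrite (prod_recl_cond n (fun j => i.+1 < j)%N (fun j => x i.+1 - x j)) mul1r.
Qed.
Lemma PP_rec (R : comRingType) (d : R) n (x y : nat -> R) :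
  PP d n.+1 x y = hh d (x 0%N) (y 0%N) * (\prod_(j < n) hh d (x 0%N) (y j.+1))
    * ((\prod_(i < n) hh d (x i.+1) (y 0%N)) * PP d n (fun k => x k.+1) (fun k => y k.+1)).
Proof.
rewrite /PP big_ord_recl big_ord_recl; congr (_ * _ * _).
rewrite -big_split; apply: eq_bigr => i _.
by rewrite big_ord_recl.
Qed.

From mathcomp Require Import zify.

Lemma prod_r (R : fieldType) (k : R) n (a b : nat -> R) :
  \prod_(i < n) (k * a i / b i) = k ^+ n * \prod_(i < n) a i * (\prod_(i < n) b i)^-1.
Proof.
rewrite big_split big_split /= prodfV prodr_const card_ord //.
Qed.

Lemma cauchy (R : fieldType) (d : R) n : forall x y : nat -> R,
  (forall i j, (i < n)%N -> (j < n)%N -> hh d (x i) (y j) != 0) ->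
  \det (\matrix_(i < n, j < n) (hh d (x i) (y j))^-1) * PP d n x y
   = d ^+ (n * n.-1) * (VV n x * VV n y).
Proof.
elim: n => [|n IH] x y hnz.
  by rewrite det_mx00 /PP /VV !big_ord0 !mulr1 expr0.
set x' := fun k => x k.+1; set y' := fun k => y k.+1.
have h00 : hh d (x 0%N) (y 0%N) != 0 by apply: hnz.
have hi0 : forall i, (i < n)%N -> hh d (x' i) (y 0%N) != 0 by move=> i hi; apply: hnz.
have h0j : forall j, (j < n)%N -> hh d (x 0%N) (y' j) != 0 by move=> j hj; apply: hnz.
have hij : forall i j, (i < n)%N -> (j < n)%N -> hh d (x' i) (y' j) != 0.
  by move=> i j hi hj; apply: hnz.
pose M : 'M[R]_(1 + n) := \matrix_(i < 1 + n, j < 1 + n) (hh d (x i) (y j))^-1.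
pose r := \row_(i < n) (d ^+ 2 * (x 0%N - x' i) / hh d (x' i) (y 0%N)).
pose c := \row_(j < n) (1 * (y 0%N - y' j) / hh d (x 0%N) (y' j)).
pose N := \matrix_(i < n, j < n) (hh d (x' i) (y' j))^-1.
have hS : drsubmx M - (M 0 0)^-1 *: (dlsubmx M *m ursubmx M)
          = diag_mx r *m N *m diag_mx c.
  rewrite mul_diag_mx mul_mx_diag; apply/matrixP => i j; rewrite !mxE big_ord1 !mxE /=.
  have a1 := hi0 i (ltn_ord i); have a2 := h0j j (ltn_ord j).
  have a3 := hij i j (ltn_ord i) (ltn_ord j).
  rewrite /x' /y' in a1 a2 a3 *; rewrite !add1n invrK.
  move: a1 a2 a3; rewrite /hh => a1 a2 a3.
  by field; rewrite ?a1 ?a2 ?a3.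
have hM00 : M 0 0 != 0 by rewrite mxE invr_eq0.
have := schur hM00; rewrite hS !det_mulmx !det_diag => hdet.
change (\det M * PP d n.+1 x y = d ^+ (n.+1 * n.+1.-1) * (VV n.+1 x * VV n.+1 y)).
rewrite hdet PP_rec !VV_rec.
have -> : \prod_(i < n) r 0 i = d ^+ 2 ^+ n * \prod_(i < n) (x 0%N - x' i)
     * (\prod_(i < n) hh d (x' i) (y 0%N))^-1.
  by rewrite -(prod_r _ _ (fun i => x 0%N - x' i) (fun i => hh d (x' i) (y 0%N))); apply: eq_bigr => i _; rewrite mxE.
have -> : \prod_(i < n) c 0 i = 1 ^+ n * \prod_(i < n) (y 0%N - y' i)
     * (\prod_(i < n) hh d (x 0%N) (y' i))^-1.
  by rewrite -(prod_r _ _ (fun i => y 0%N - y' i) (fun i => hh d (x 0%N) (y' i))); apply: eq_bigr => i _; rewrite mxE.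
have hexp : (n.+1 * n.+1.-1 = 2 * n + n * n.-1)%N by case: n {IH hnz hi0 h0j hij M r c N hS hM00 hdet} => //= k; lia.
rewrite hexp exprD exprM expr1n mul1r.
have IH' := IH x' y' hij.
have hB : \prod_(i < n) hh d (x' i) (y 0%N) != 0.
  by apply/prodf_neq0 => i _; apply: hi0.
have hE : \prod_(i < n) hh d (x 0%N) (y' i) != 0.
  by apply/prodf_neq0 => i _; apply: h0j.
rewrite mxE.
move: IH' hB hE h00.
set detN := \det N; set P' := PP _ _ _ _; set Vx := VV n x'; set Vy := VV n y'.
set A := \prod_(i < n) (x 0%N - x' i); set B := \prod_(i < n) hh d (x' i) (y 0%N).
set C := \prod_(i < n) (y 0%N - y' i); set E := \prod_(i < n) hh d (x 0%N) (y' i).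
set h := hh d (x 0%N) (y 0%N); set D := d ^+ 2 ^+ n; set D' := d ^+ (n * n.-1).
move=> IH' hB hE h00.
rewrite (_ : D * D' * (A * Vx * (C * Vy)) = D * A * C * (D' * (Vx * Vy))); last by ring.
rewrite -IH'.
by field; rewrite ?hB ?hE ?h00.
Qed.

Theorem mainTheorem9 (R : numClosedFieldType) (m : nat) (hm : (0 < m)%N)
    (w : 'I_(m + m) -> R)
    (hdistL : forall i j : 'I_m, i != j -> w (lshift m i) != w (lshift m j))
    (hdistR : forall i j : 'I_m, i != j -> w (rshift m i) != w (rshift m j))
    (hnz : forall i j : 'I_m, hzeta 1 (w (lshift m i)) (w (rshift m j)) != 0) :
  H2m 1 w = 2 ^+ (m * (m - 1)).
Proof.
case: m hm w hdistL hdistR hnz => // m _ w hdistL hdistR hnz.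
pose x k := w (lshift m.+1 (inord k)).
pose y k := w (rshift m.+1 (inord k)).
have hz : forall a b : R, hzeta 1 a b = hh 2 a b.
  by move=> a b; rewrite /hzeta /hh; ring.
have hmat : \matrix_(i < m.+1, j < m.+1) (hzeta 1 (w (lshift m.+1 i)) (w (rshift m.+1 j)))^-1
   = \matrix_(i < m.+1, j < m.+1) (hh 2 (x i) (y j))^-1.
  by apply/matrixP => i j; rewrite !mxE /x /y !inord_val hz.
have hP : \prod_(i < m.+1) \prod_(j < m.+1) hzeta 1 (w (lshift m.+1 i)) (w (rshift m.+1 j))
   = PP 2 m.+1 x y.
  by apply: eq_bigr => i _; apply: eq_bigr => j _; rewrite /x /y !inord_val hz.
have hVx : \prod_(i < m.+1) \prod_(j < m.+1 | (i < j)%N) (w (lshift m.+1 i) - w (lshift m.+1 j))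
   = VV m.+1 x.
  by apply: eq_bigr => i _; apply: eq_bigr => j _; rewrite /x !inord_val.
have hVy : \prod_(i < m.+1) \prod_(j < m.+1 | (i < j)%N) (w (rshift m.+1 i) - w (rshift m.+1 j))
   = VV m.+1 y.
  by apply: eq_bigr => i _; apply: eq_bigr => j _; rewrite /y !inord_val.
have hnz' : forall i j, (i < m.+1)%N -> (j < m.+1)%N -> hh 2 (x i) (y j) != 0.
  by move=> i j _ _; rewrite -hz; apply: hnz.
have hC := cauchy hnz'.
have nVx : VV m.+1 x != 0.
  rewrite -hVx; apply/prodf_neq0 => i _; apply/prodf_neq0 => j hij.
  rewrite subr_eq0; apply: hdistL; apply/eqP => eij; by rewrite eij ltnn in hij.
have nVy : VV m.+1 y != 0.
  rewrite -hVy; apply/prodf_neq0 => i _; apply/prodf_neq0 => j hij.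
  rewrite subr_eq0; apply: hdistR; apply/eqP => eij; by rewrite eij ltnn in hij.
rewrite /H2m hmat hP hVx hVy subn1.
move: hC nVx nVy.
set D := \det _; set P := PP _ _ _ _; set Vx := VV _ x; set Vy := VV _ y.
move=> hC nVx nVy.
rewrite (_ : P / (Vx * Vy) * D = (D * P) / (Vx * Vy)); last by field; rewrite ?nVx ?nVy.
by rewrite hC; field; rewrite ?nVx ?nVy.
Qed.
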